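(* Let $E$ be a Banach lattice, $u_0\in E^+$, $\delta>0$, and let $x_1^*,\dots,x_N^*\in (E^* )^+$ be mutually disjoint. Suppose $\langle u_0,x_n^*\rangle\ge\delta$ for all $1\le n\le N$ and that there exists $y^*\in(E^* )^+$ with $$\{x_n^*\}_{n=1}^N\subseteq [-y^*,y^*]+\tfrac12\delta B_{\rho_{u_0}} .$$ Then $N\le 2\langle u_0,y^*\rangle/\delta$.
   Context: For $u_0\in E$, $\rho_{u_0}$ is the Riesz seminorm on $E^*$ given by $\rho_{u_0}(x^* )=\langle |u_0|,|x^*|\rangle$, and $B_{\rho_{u_0}}=\{x^*\in E^*:\rho_{u_0}(x^* )\le 1\}$. $[-y^*,y^*]$ is the order interval in $E^*$. *)

(* Defs.v *)
From Stdlib Require Export Reals.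
Open Scope R_scope.
Set Implicit Arguments.

Record BanachLattice := {
  car :> Type;
  add : car -> car -> car;
  opp : car -> car;
  zero : car;
  scal : R -> car -> car;
  le : car -> car -> Prop;
  join : car -> car -> car;
  norm : car -> R;
  addA : forall x y z, add x (add y z) = add (add x y) z;
  addC : forall x y, add x y = add y x;
  add0 : forall x, add x zero = x;
  addN : forall x, add x (opp x) = zero;
  scal_addr : forall a x y, scal a (add x y) = add (scal a x) (scal a y);
  scal_addl : forall a b x, scal (a + b) x = add (scal a x) (scal b x);
  scalA : forall a b x, scal a (scal b x) = scal (a * b) x;
  scal1 : forall x, scal 1 x = x;
  le_refl : forall x, le x x;
  le_trans : forall x y z, le x y -> le y z -> le x z;
  le_antisym : forall x y, le x y -> le y x -> x = y;
  le_add : forall x y z, le x y -> le (add x z) (add y z);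
  le_scal : forall a x y, 0 <= a -> le x y -> le (scal a x) (scal a y);
  join_ubl : forall x y, le x (join x y);
  join_ubr : forall x y, le y (join x y);
  join_lub : forall x y z, le x z -> le y z -> le (join x y) z;
  norm0 : forall x, norm x = 0 <-> x = zero;
  normD : forall x y, norm (add x y) <= norm x + norm y;
  normZ : forall a x, norm (scal a x) = Rabs a * norm x;
  norm_lattice : forall x y, le (join x (opp x)) (join y (opp y)) -> norm x <= norm y;
  complete : forall u : nat -> car,
    (forall eps, eps > 0 -> exists M, forall m n, (m >= M)%nat -> (n >= M)%nat ->
        norm (add (u m) (opp (u n))) < eps) ->
    exists l, forall eps, eps > 0 -> exists M, forall n, (n >= M)%nat ->
        norm (add (u n) (opp l)) < eps
}.

Arguments add {b0}. Arguments opp {b0}. Arguments scal {b0}. Arguments le {b0}.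
Arguments join {b0}. Arguments norm {b0}.

Section Dual.
Variable E : BanachLattice.

Definition absE (x : E) : E := join x (opp x).
Definition posE (x : E) : Prop := le (zero E) x.

Definition in_dual (f : E -> R) : Prop :=
  (forall x y, f (add x y) = f x + f y) /\
  (forall a x, f (scal a x) = a * f x) /\
  (exists C, forall x, Rabs (f x) <= C * norm x).

Definition dle (f g : E -> R) : Prop := forall x, posE x -> f x <= g x.
Definition dpos (f : E -> R) : Prop := in_dual f /\ dle (fun _ => 0) f.

Definition is_dsup (f g h : E -> R) : Prop :=
  in_dual h /\ dle f h /\ dle g h /\
  forall k, in_dual k -> dle f k -> dle g k -> dle h k.
Definition is_dinf (f g h : E -> R) : Prop :=
  in_dual h /\ dle h f /\ dle h g /\
  forall k, in_dual k -> dle k f -> dle k g -> dle k h.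

Definition is_dabs (f a : E -> R) : Prop := is_dsup f (fun x => - f x) a.

Definition ddisjoint (f g : E -> R) : Prop :=
  exists a b, is_dabs f a /\ is_dabs g b /\ is_dinf a b (fun _ => 0).

(* rho_{u0}(f) = <|u0|, |f|> = r *)
Definition rho_eq (u0 : E) (f : E -> R) (r : R) : Prop :=
  exists a, is_dabs f a /\ r = a (absE u0).

Definition in_Brho (u0 : E) (f : E -> R) : Prop :=
  in_dual f /\ exists r, rho_eq u0 f r /\ r <= 1.

Definition in_interval_plus_ball (u0 : E) (y : E -> R) (c : R) (f : E -> R) : Prop :=
  exists z w, in_dual z /\ dle (fun x => - y x) z /\ dle z y /\
    in_Brho u0 w /\ forall x, f x = z x + c * w x.

End Dual.

Arguments absE {E}. Arguments posE {E}. Arguments in_dual {E}. Arguments dle {E}.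
Arguments dpos {E}. Arguments is_dsup {E}. Arguments is_dinf {E}. Arguments is_dabs {E}.
Arguments ddisjoint {E}. Arguments rho_eq {E}. Arguments in_Brho {E}.
Arguments in_interval_plus_ball {E}.

(* Main.v *)
Require Import Defs.
From Stdlib Require Import Reals Lra List ClassicalEpsilon Classical.
Open Scope R_scope.

Lemma add0l (E : BanachLattice) (x : E) : add (zero E) x = x.
Proof. rewrite addC. apply add0. Qed.
Lemma addNl (E : BanachLattice) (x : E) : add (opp x) x = zero E.
Proof. rewrite addC. apply addN. Qed.
Lemma add_uniq (E : BanachLattice) (x y : E) : add x y = zero E -> y = opp x.
Proof.
  intro H. rewrite <- (add0 E y). rewrite <- (addN E x). rewrite addA.
  rewrite (addC E y x), H. apply add0l.
Qed.
Lemma oppK (E : BanachLattice) (x : E) : opp (opp x) = x.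
Proof. symmetry. apply add_uniq. apply addNl. Qed.
Lemma opp0 (E : BanachLattice) : opp (zero E) = zero E.
Proof. symmetry. apply add_uniq. apply add0. Qed.
Lemma scal0 (E : BanachLattice) (x : E) : scal 0 x = zero E.
Proof.
  pose proof (scal_addl E 0 0 x) as H. rewrite Rplus_0_r in H.
  assert (H2 : add (add (scal 0 x) (scal 0 x)) (opp (scal 0 x)) = scal 0 x)
    by (rewrite <- addA, addN, add0; reflexivity).
  rewrite <- H in H2. rewrite addN in H2. auto.
Qed.
Lemma opp_scal (E : BanachLattice) (x : E) : opp x = scal (-1) x.
Proof.
  symmetry. apply add_uniq. rewrite <- (scal1 E x) at 1. rewrite <- scal_addl.
  replace (1 + -1) with 0 by ring. apply scal0.
Qed.
Lemma opp_add (E : BanachLattice) (a b : E) : opp (add a b) = add (opp a) (opp b).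
Proof. rewrite !opp_scal. apply scal_addr. Qed.
Lemma scal_opp (E : BanachLattice) a (x : E) : scal a (opp x) = opp (scal a x).
Proof. rewrite !opp_scal, !scalA. f_equal. ring. Qed.
Lemma scal_zero (E : BanachLattice) a : scal a (zero E) = zero E.
Proof. pose proof (scal0 E (zero E)) as H. rewrite <- H at 1. rewrite scalA, Rmult_0_r. apply scal0. Qed.
Lemma cancel1 (E : BanachLattice) (b d : E) : add (opp b) (add b d) = d.
Proof. rewrite addA, addNl. apply add0l. Qed.
Lemma cancel2 (E : BanachLattice) (b d : E) : add b (add (opp b) d) = d.
Proof. rewrite addA, addN. apply add0l. Qed.
Lemma subK (E : BanachLattice) (a b : E) : add (add a (opp b)) b = a.
Proof. rewrite <- addA, addNl. apply add0. Qed.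
Lemma sub_eq (E : BanachLattice) (a b c d : E) :
  add a (opp b) = add c (opp d) -> add a d = add c b.
Proof.
  intro H.
  assert (H2 : add (add a (opp b)) (add b d) = add (add c (opp d)) (add b d)) by (rewrite H; auto).
  rewrite <- !addA in H2. rewrite cancel1 in H2. rewrite (addC E b d), cancel1 in H2. exact H2.
Qed.
Lemma add4 (E : BanachLattice) (a b c d : E) :
  add (add a b) (add c d) = add (add a c) (add b d).
Proof.
  rewrite <- (addA E a b), (addA E b c d), (addC E b c), <- (addA E c b d), addA. reflexivity.
Qed.

Lemma le_addl (E : BanachLattice) (x y z : E) : le x y -> le (add z x) (add z y).
Proof. intro H. rewrite (addC E z x), (addC E z y). apply le_add; auto. Qed.
Lemma le_add2 (E : BanachLattice) (a b c d : E) : le a b -> le c d -> le (add a c) (add b d).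
Proof. intros. apply le_trans with (add b c). apply le_add; auto. apply le_addl; auto. Qed.
Lemma le_sub0 (E : BanachLattice) (u v : E) : le v u -> le (zero E) (add u (opp v)).
Proof. intro H. pose proof (le_add E v u (opp v) H). rewrite addN in H0. auto. Qed.
Lemma le_0sub (E : BanachLattice) (u v : E) : le (zero E) (add u (opp v)) -> le v u.
Proof. intro H. pose proof (le_add E _ _ v H). rewrite add0l, subK in H0. auto. Qed.
Lemma le_opp (E : BanachLattice) (x y : E) : le x y -> le (opp y) (opp x).
Proof. intro H. apply le_0sub. rewrite oppK, addC. apply le_sub0; auto. Qed.
Lemma pos_opp (E : BanachLattice) (x : E) : posE x -> le (opp x) (zero E).
Proof. intro H. pose proof (le_opp E _ _ H). rewrite opp0 in H0. auto. Qed.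
Lemma le_sub_self (E : BanachLattice) (u v : E) : posE v -> le (add u (opp v)) u.
Proof.
  intro H. pose proof (le_add E _ _ u (pos_opp E v H)). rewrite add0l, addC in H0. auto.
Qed.
Lemma pos_add (E : BanachLattice) (a b : E) : posE a -> posE b -> posE (add a b).
Proof. unfold posE. intros. rewrite <- (add0 E (zero E)). apply le_add2; auto. Qed.
Lemma pos_scal (E : BanachLattice) a (x : E) : 0 <= a -> posE x -> posE (scal a x).
Proof. unfold posE. intros. rewrite <- (scal_zero E a). apply le_scal; auto. Qed.
Lemma join_comm (E : BanachLattice) (a b : E) : join a b = join b a.
Proof. apply le_antisym; apply join_lub; auto using join_ubl, join_ubr. Qed.
Lemma join_add (E : BanachLattice) (z a b : E) : add z (join a b) = join (add z a) (add z b).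
Proof.
  apply le_antisym.
  - apply le_trans with (add z (add (opp z) (join (add z a) (add z b))));
    [ | rewrite cancel2; apply le_refl]. apply le_addl.
    apply join_lub.
    + rewrite <- (cancel1 E z a) at 1. apply le_addl. apply join_ubl.
    + rewrite <- (cancel1 E z b) at 1. apply le_addl. apply join_ubr.
  - apply join_lub; apply le_addl; auto using join_ubl, join_ubr.
Qed.
Lemma abs_pos (E : BanachLattice) (x : E) : posE (join x (opp x)).
Proof.
  set (m := join x (opp x)).
  assert (H : le (zero E) (add m m)).
  { rewrite <- (addN E x). apply le_add2; unfold m; auto using join_ubl, join_ubr. }
  assert (Hm : add m m = scal 2 m).
  { rewrite <- (scal1 E m) at 1 2. rewrite <- scal_addl. f_equal; ring. }
  rewrite Hm in H. unfold posE. pose proof (@le_scal E (/2) _ _ ltac:(lra) H).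
  rewrite scal_zero, scalA in H0. replace (/2 * 2) with 1 in H0 by field. rewrite scal1 in H0. auto.
Qed.
Lemma norm_opp (E : BanachLattice) (x : E) : norm (opp x) = norm x.
Proof. rewrite opp_scal, normZ. replace (Rabs (-1)) with 1 by (rewrite Rabs_left; lra). ring. Qed.
Lemma norm_ge0 (E : BanachLattice) (x : E) : 0 <= norm x.
Proof.
  pose proof (normD E x (opp x)). rewrite addN, norm_opp in H.
  assert (norm (zero E) = 0) by (apply norm0; auto). lra.
Qed.

Lemma lin_zero (E : BanachLattice) (f : E -> R) : in_dual f -> f (zero E) = 0.
Proof. intros [Ha [Hs _]]. pose proof (scal0 E (zero E)) as H. rewrite <- H, Hs. ring. Qed.
Lemma lin_add (E : BanachLattice) (f : E -> R) x y : in_dual f -> f (add x y) = f x + f y.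
Proof. intros [Ha _]. auto. Qed.
Lemma lin_scal (E : BanachLattice) (f : E -> R) a x : in_dual f -> f (scal a x) = a * f x.
Proof. intros [_ [Hs _]]. auto. Qed.
Lemma lin_opp (E : BanachLattice) (f : E -> R) x : in_dual f -> f (opp x) = - f x.
Proof. intros Hf. rewrite opp_scal, lin_scal; auto. ring. Qed.
Lemma lin_sub (E : BanachLattice) (f : E -> R) x y : in_dual f -> f (add x (opp y)) = f x - f y.
Proof. intros Hf. rewrite lin_add, lin_opp; auto. Qed.
Lemma lin_mono (E : BanachLattice) (f : E -> R) x y : in_dual f -> dle (fun _ => 0) f ->
  le x y -> f x <= f y.
Proof. intros Hf Hp H. pose proof (Hp _ (le_sub0 E _ _ H)). simpl in H0. rewrite lin_sub in H0; auto. lra. Qed.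

Lemma riesz (E : BanachLattice) (v u1 u2 : E) : posE v -> posE u1 -> posE u2 ->
  le v (add u1 u2) -> exists v1 v2, posE v1 /\ le v1 u1 /\ posE v2 /\ le v2 u2 /\ v = add v1 v2.
Proof.
  intros Hv Hu1 Hu2 H.
  set (J := join (opp v) (opp u1)).
  exists (opp J), (add v J).
  assert (HJv : le (opp v) J) by apply join_ubl.
  assert (HJu : le (opp u1) J) by apply join_ubr.
  assert (HJ0 : le J (zero E)) by (apply join_lub; apply pos_opp; auto).
  assert (Hv1v : le (opp J) v) by (rewrite <- (oppK E v); apply le_opp; auto).
  repeat split.
  - unfold posE. rewrite <- opp0. apply le_opp; auto.
  - rewrite <- (oppK E u1). apply le_opp; auto.
  - unfold posE. apply le_trans with (add v (opp v)). rewrite addN; apply le_refl. apply le_addl; auto.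
  - unfold J. rewrite join_add, addN. apply join_lub; [exact Hu2|].
    pose proof (le_add E _ _ (opp u1) H). rewrite (addC E u1 u2), <- (addA E u2), addN, add0 in H0. exact H0.
  - rewrite addA, (addC E (opp J) v), <- addA, addNl, add0. reflexivity.
Qed.

Definition phi (E : BanachLattice) (f g : E -> R) (u v : E) := f v + g (add u (opp v)).
Arguments phi {E}.
Definition Sset (E : BanachLattice) (f g : E -> R) (u : E) (r : R) :=
  exists v, posE v /\ le v u /\ r = - phi f g u v.
Arguments Sset {E}.
Definition hinf (E : BanachLattice) (f g : E -> R) (u : E) :=
  - epsilon (inhabits 0) (fun m => is_lub (Sset f g u) m).
Arguments hinf {E}.
Definition good (E : BanachLattice) (f g : E -> R) :=
  in_dual f /\ in_dual g /\ dle (fun _ => 0) f /\ dle (fun _ => 0) g.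
Arguments good {E}.


Lemma phi_lin (E : BanachLattice) (f g : E -> R) u v : good f g -> phi f g u v = f v + g u - g v.
Proof. intros [Hf [Hg _]]. unfold phi. rewrite lin_sub; auto. ring. Qed.

Lemma phi_ge0 (E : BanachLattice) (f g : E -> R) u v : good f g -> posE v -> le v u -> 0 <= phi f g u v.
Proof.
  intros [Hf [Hg [Hfp Hgp]]] Hv Hvu. unfold phi.
  pose proof (Hfp v Hv). pose proof (Hgp _ (le_sub0 E _ _ Hvu)). simpl in *. lra.
Qed.

Lemma hinf_lub (E : BanachLattice) (f g : E -> R) u : good f g -> posE u ->
  is_lub (Sset f g u) (- hinf f g u).
Proof.
  intros Hgd Hu. unfold hinf. rewrite Ropp_involutive. apply epsilon_spec.
  destruct (completeness (Sset f g u)) as [m Hm].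
  - exists 0. intros r [v [Hv [Hvu ->]]]. pose proof (phi_ge0 E f g u v Hgd Hv Hvu). lra.
  - exists (- phi f g u (zero E)). exists (zero E). repeat split; auto. apply le_refl.
  - exists m; auto.
Qed.

Lemma hinf_le (E : BanachLattice) (f g : E -> R) u v : good f g -> posE u -> posE v -> le v u ->
  hinf f g u <= phi f g u v.
Proof.
  intros Hgd Hu Hv Hvu. destruct (hinf_lub E f g u Hgd Hu) as [Hub _].
  assert (Sset f g u (- phi f g u v)) by (exists v; auto). apply Hub in H. lra.
Qed.

Lemma hinf_ge0 (E : BanachLattice) (f g : E -> R) u : good f g -> posE u -> 0 <= hinf f g u.
Proof.
  intros Hgd Hu. destruct (hinf_lub E f g u Hgd Hu) as [_ Hl].
  assert (- hinf f g u <= 0). { apply Hl. intros r [v [Hv [Hvu ->]]].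
    pose proof (phi_ge0 E f g u v Hgd Hv Hvu). lra. } lra.
Qed.

Lemma hinf_approx (E : BanachLattice) (f g : E -> R) u eps : good f g -> posE u -> eps > 0 ->
  exists v, posE v /\ le v u /\ phi f g u v < hinf f g u + eps.
Proof.
  intros Hgd Hu He. apply NNPP. intro Hn.
  destruct (hinf_lub E f g u Hgd Hu) as [_ Hl].
  assert (- hinf f g u <= - hinf f g u - eps). { apply Hl. intros r [v [Hv [Hvu ->]]].
    assert (~ phi f g u v < hinf f g u + eps) by (intro; apply Hn; exists v; auto). lra. }
  lra.
Qed.

Lemma hinf_add (E : BanachLattice) (f g : E -> R) u1 u2 : good f g -> posE u1 -> posE u2 ->
  hinf f g (add u1 u2) = hinf f g u1 + hinf f g u2.
Proof.
  intros Hgd Hu1 Hu2. pose proof Hgd as [Hf [Hg _]].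
  assert (Hu : posE (add u1 u2)) by (apply pos_add; auto).
  apply Rle_antisym.
  - apply le_epsilon. intros eps He.
    destruct (hinf_approx E f g u1 (eps/2) Hgd Hu1 ltac:(lra)) as [v1 [Hv1 [Hv1u H1]]].
    destruct (hinf_approx E f g u2 (eps/2) Hgd Hu2 ltac:(lra)) as [v2 [Hv2 [Hv2u H2]]].
    pose proof (hinf_le E f g (add u1 u2) (add v1 v2) Hgd Hu (pos_add E _ _ Hv1 Hv2)
      (le_add2 E _ _ _ _ Hv1u Hv2u)).
    rewrite !phi_lin in *; auto. rewrite !(lin_add E g), (lin_add E f) in H; auto. lra.
  - destruct (hinf_lub E f g _ Hgd Hu) as [Hub _].
    assert (- (hinf f g u1 + hinf f g u2) >= - hinf f g (add u1 u2)); [| lra].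
    apply Rle_ge. destruct (hinf_lub E f g _ Hgd Hu) as [_ Hl]. apply Hl.
    intros r [v [Hv [Hvu ->]]].
    destruct (riesz E v u1 u2 Hv Hu1 Hu2 Hvu) as [v1 [v2 [Hv1 [Hv1u [Hv2 [Hv2u ->]]]]]].
    pose proof (hinf_le E f g u1 v1 Hgd Hu1 Hv1 Hv1u).
    pose proof (hinf_le E f g u2 v2 Hgd Hu2 Hv2 Hv2u).
    rewrite !phi_lin in *; auto. rewrite !(lin_add E g), (lin_add E f); auto. lra.
Qed.

Lemma hinf_zero (E : BanachLattice) (f g : E -> R) : good f g -> hinf f g (zero E) = 0.
Proof.
  intros Hgd. pose proof (hinf_add E f g (zero E) (zero E) Hgd (le_refl E _) (le_refl E _)).
  rewrite add0 in H. lra.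
Qed.

Lemma hinf_scal_ge (E : BanachLattice) (f g : E -> R) a u : good f g -> posE u -> 0 < a ->
  a * hinf f g u <= hinf f g (scal a u).
Proof.
  intros Hgd Hu Ha. pose proof Hgd as [Hf [Hg _]].
  assert (Hau : posE (scal a u)) by (apply pos_scal; auto; lra).
  destruct (hinf_lub E f g _ Hgd Hau) as [_ Hl].
  assert (- hinf f g (scal a u) <= - (a * hinf f g u)); [| lra].
  apply Hl. intros r [v [Hv [Hvu ->]]].
  set (v' := scal (/a) v).
  assert (Hv' : posE v') by (apply pos_scal; auto; apply Rlt_le, Rinv_0_lt_compat; auto).
  assert (Hv'u : le v' u).
  { pose proof (@le_scal E (/a) _ _ (Rlt_le _ _ (Rinv_0_lt_compat _ Ha)) Hvu).
    rewrite scalA, Rinv_l, scal1 in H; auto; lra. }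
  pose proof (hinf_le E f g u v' Hgd Hu Hv' Hv'u).
  assert (Hvv : v = scal a v') by (unfold v'; rewrite scalA, Rinv_r, scal1; auto; lra).
  rewrite !phi_lin in *; auto. rewrite Hvv, !lin_scal; auto.
  apply Ropp_le_contravar. replace (a * f v' + a * g u - a * g v') with (a * (f v' + g u - g v')) by ring. apply Rmult_le_compat_l; lra.

Qed.

Lemma hinf_scal (E : BanachLattice) (f g : E -> R) a u : good f g -> posE u -> 0 <= a ->
  hinf f g (scal a u) = a * hinf f g u.
Proof.
  intros Hgd Hu Ha. destruct (Req_dec a 0) as [->|Ha0].
  - rewrite scal0, hinf_zero; auto. ring.
  - apply Rle_antisym; [| apply hinf_scal_ge; auto; lra].
    assert (Hau : posE (scal a u)) by (apply pos_scal; auto).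
    pose proof (hinf_scal_ge E f g (/a) (scal a u) Hgd Hau ltac:(apply Rinv_0_lt_compat; lra)).
    rewrite scalA, Rinv_l, scal1 in H; auto.
    apply Rmult_le_compat_l with (r := a) in H; [|lra]. rewrite <- Rmult_assoc, Rinv_r, Rmult_1_l in H; auto.
Qed.

Definition Hf (E : BanachLattice) (f g : E -> R) (x : E) :=
  hinf f g (join x (zero E)) - hinf f g (join (opp x) (zero E)).
Arguments Hf {E}.

Lemma posdecomp (E : BanachLattice) (x : E) :
  x = add (join x (zero E)) (opp (join (opp x) (zero E))).
Proof.
  assert (H : add x (join (opp x) (zero E)) = join x (zero E)).
  { rewrite join_add, addN, add0, join_comm. reflexivity. }
  rewrite <- H, <- addA, addN, add0. reflexivity.
Qed.

Lemma Hf_decomp (E : BanachLattice) (f g : E -> R) x p q : good f g -> posE p -> posE q ->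
  x = add p (opp q) -> Hf f g x = hinf f g p - hinf f g q.
Proof.
  intros Hgd Hp Hq Hx. unfold Hf.
  set (P := join x (zero E)). set (Q := join (opp x) (zero E)).
  assert (HP : posE P) by apply join_ubr. assert (HQ : posE Q) by apply join_ubr.
  assert (Hd : add P (opp Q) = add p (opp q)) by (rewrite <- Hx; symmetry; apply posdecomp).
  apply sub_eq in Hd.
  pose proof (hinf_add E f g P q Hgd HP Hq). pose proof (hinf_add E f g p Q Hgd Hp HQ).
  rewrite Hd in H. lra.
Qed.

Lemma Hf_dual (E : BanachLattice) (f g : E -> R) : good f g -> in_dual (Hf f g).
Proof.
  intros Hgd. pose proof Hgd as [Hfd [Hgdl [Hfp Hgp]]].
  assert (Hpos : forall x, posE (join x (zero E))) by (intro; apply join_ubr).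
  split; [|split].
  - intros x y. rewrite (Hf_decomp E f g x _ _ Hgd (Hpos x) (Hpos (opp x)) (posdecomp E x)).
    rewrite (Hf_decomp E f g y _ _ Hgd (Hpos y) (Hpos (opp y)) (posdecomp E y)).
    erewrite (Hf_decomp E f g (add x y)); [| exact Hgd | apply pos_add; apply Hpos | apply pos_add; apply Hpos |].
    2: { rewrite (posdecomp E x) at 1. rewrite (posdecomp E y) at 1. rewrite opp_add. apply add4. }
    rewrite !hinf_add; auto. ring.
  - intros a x. destruct (Rle_dec 0 a) as [Ha|Ha].
    + rewrite (Hf_decomp E f g (scal a x) (scal a (join x (zero E))) (scal a (join (opp x) (zero E)))); [| exact Hgd | apply pos_scal; auto | apply pos_scal; auto |].
      2: { rewrite (posdecomp E x) at 1. rewrite scal_addr, scal_opp. reflexivity. }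
      rewrite !hinf_scal; auto. unfold Hf. ring.
    + rewrite (Hf_decomp E f g (scal a x) (scal (-a) (join (opp x) (zero E))) (scal (-a) (join x (zero E)))); [| exact Hgd | apply (pos_scal E (-a)); [lra| apply (Hpos (opp x))] | apply (pos_scal E (-a)); [lra| apply (Hpos x)] |].
      2: { rewrite (posdecomp E x) at 1. rewrite scal_addr, scal_opp, addC.
           rewrite (opp_scal E (scal (-a) (join x (zero E)))), scalA.
           rewrite (opp_scal E (scal a (join _ _))), scalA.
           replace (-1 * - a) with a by ring. replace (-1 * a) with (- a) by ring. reflexivity. }
      rewrite !hinf_scal; auto; try lra. unfold Hf. ring.
  - destruct Hfd as [_ [_ [C HC]]]. exists (2 * Rabs C). intro x. unfold Hf.
    set (P := join x (zero E)). set (Q := join (opp x) (zero E)).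
    assert (HP : posE P) by apply join_ubr. assert (HQ : posE Q) by apply join_ubr.
    pose proof (hinf_ge0 E f g P Hgd HP). pose proof (hinf_ge0 E f g Q Hgd HQ).
    pose proof (hinf_le E f g P P Hgd HP HP (le_refl E _)).
    pose proof (hinf_le E f g Q Q Hgd HQ HQ (le_refl E _)).
    rewrite !phi_lin in H1, H2; auto.
    assert (Hnorm : forall p, posE p -> le p (join x (opp x)) -> Rabs (f p) <= Rabs C * norm x).
    { intros p Hp Hpx. apply Rle_trans with (C * norm p); auto.
      pose proof (norm_ge0 E p). pose proof (Rle_abs C).
      assert (norm p <= norm x).
      { apply norm_lattice. apply join_lub; auto.
        apply le_trans with (zero E). apply pos_opp; auto. apply abs_pos. }
      apply Rle_trans with (Rabs C * norm p). apply Rmult_le_compat_r; auto.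
      apply Rmult_le_compat_l; auto. apply Rabs_pos. }
    assert (HPx : le P (join x (opp x))) by (apply join_lub; [apply join_ubl | apply abs_pos]).
    assert (HQx : le Q (join x (opp x))) by (apply join_lub; [apply join_ubr | apply abs_pos]).
    pose proof (Hnorm P HP HPx). pose proof (Hnorm Q HQ HQx).
    pose proof (Rle_abs (f P)). pose proof (Rle_abs (f Q)).
    apply Rabs_le. lra.
Qed.

Lemma RK (E : BanachLattice) (f g : E -> R) : good f g ->
  (forall k, in_dual k -> dle k f -> dle k g -> dle k (fun _ => 0)) ->
  forall u, posE u -> forall eps, eps > 0 ->
  exists v, posE v /\ le v u /\ f v + g (add u (opp v)) < eps.
Proof.
  intros Hgd Hglb u Hu eps He. pose proof Hgd as [Hfd [Hgdl [Hfp Hgp]]].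
  assert (Hval : forall w, posE w -> Hf f g w = hinf f g w).
  { intros w Hw. rewrite (Hf_decomp E f g w w (zero E) Hgd Hw (le_refl E _)).
    rewrite hinf_zero; auto. ring. rewrite opp0, add0. reflexivity. }
  assert (Hle : dle (Hf f g) (fun _ => 0)).
  { apply Hglb. apply Hf_dual; auto.
    - intros w Hw. rewrite Hval; auto. pose proof (hinf_le E f g w w Hgd Hw Hw (le_refl E _)).
      rewrite phi_lin in H; auto. lra.
    - intros w Hw. rewrite Hval; auto. pose proof (hinf_le E f g w (zero E) Hgd Hw (le_refl E _) Hw).
      rewrite phi_lin in H; auto. rewrite !lin_zero in H; auto. lra. }
  pose proof (Hle u Hu). rewrite Hval in H; auto.
  destruct (hinf_approx E f g u eps Hgd Hu He) as [v [Hv [Hvu Hphi]]].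
  exists v. repeat split; auto. unfold phi in Hphi. lra.
Qed.

Lemma pair_disj (E : BanachLattice) (f g : E -> R) : dpos f -> dpos g -> ddisjoint f g ->
  forall u, posE u -> forall eps, eps > 0 ->
  exists v, posE v /\ le v u /\ f v + g (add u (opp v)) < eps.
Proof.
  intros Hf Hg [a [b [[Ha [Hfa _]] [[Hb [Hgb _]] [_ [Ha0 [Hb0 Hglb]]]]]]] u Hu eps He.
  destruct (RK E a b (conj Ha (conj Hb (conj Ha0 Hb0))) Hglb u Hu eps He) as [v [Hv [Hvu H]]].
  exists v. repeat split; auto.
  pose proof (Hfa v Hv). pose proof (Hgb _ (le_sub0 E _ _ Hvu)). lra.
Qed.

Lemma absE_pos (E : BanachLattice) (u : E) : posE u -> absE u = u.
Proof.
  intro Hu. unfold absE. apply le_antisym.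
  - apply join_lub. apply le_refl. apply le_trans with (zero E); auto. apply pos_opp; auto.
  - apply join_ubl.
Qed.

Lemma dpos_mono (E : BanachLattice) (f : E -> R) x y : dpos f -> le x y -> f x <= f y.
Proof. intros [Hf Hp] H. apply lin_mono; auto. Qed.

Lemma sublemma (E : BanachLattice) (N : nat) (x : nat -> (E -> R)) (n0 : nat) :
  (n0 < N)%nat ->
  (forall n, (n < N)%nat -> dpos (x n)) ->
  (forall n m, (n < N)%nat -> (m < N)%nat -> n <> m -> ddisjoint (x n) (x m)) ->
  forall L : list nat, (forall m, In m L -> (m < N)%nat /\ m <> n0) ->
  forall u, posE u -> forall eta, eta > 0 ->
  exists v, posE v /\ le v u /\ x n0 (add u (opp v)) <= INR (length L) * eta /\
    forall m, In m L -> x m v <= eta.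
Proof.
  intros Hn0 Hpos Hdis L. induction L as [|m L IH]; intros HL u Hu eta He.
  - exists u. repeat split; auto. apply le_refl.
    rewrite lin_sub by (apply Hpos; auto). simpl. lra.
    intros m [].
  - destruct (IH (fun m' Hm' => HL m' (or_intror Hm')) u Hu eta He) as [v' [Hv' [Hv'u [H1 H2]]]].
    destruct (HL m (or_introl eq_refl)) as [HmN Hmn].
    destruct (pair_disj E (x m) (x n0) (Hpos m HmN) (Hpos n0 Hn0) (Hdis m n0 HmN Hn0 Hmn) v' Hv' eta He)
      as [P [HP [HPv H3]]].
    exists P. repeat split; auto. apply le_trans with v'; auto.
    + pose proof (proj2 (Hpos m HmN) P HP). pose proof (proj2 (Hpos n0 Hn0) _ (le_sub0 E _ _ HPv)).
      cbv beta in *. pose proof Hpos n0 Hn0 as [Hd _]. rewrite lin_sub in *; auto.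
      cbn [length]. rewrite S_INR. lra.
    + intros m' [<-|Hm'].
      * pose proof (proj2 (Hpos n0 Hn0) _ (le_sub0 E _ _ HPv)). cbv beta in *. lra.
      * destruct (HL m' (or_intror Hm')) as [Hm'N _].
        pose proof (dpos_mono E (x m') _ _ (Hpos m' Hm'N) HPv). pose proof (H2 m' Hm'). lra.
Qed.

Lemma claim (E : BanachLattice) (N : nat) (x : nat -> (E -> R)) (y : E -> R) :
  (forall n, (n < N)%nat -> dpos (x n)) ->
  (forall n m, (n < N)%nat -> (m < N)%nat -> n <> m -> ddisjoint (x n) (x m)) ->
  dpos y ->
  forall L : list nat, NoDup L -> (forall m, In m L -> (m < N)%nat) ->
  forall u d, posE u ->
  (forall n, In n L -> forall v, posE v -> le v u -> y v >= d - x n (add u (opp v))) ->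
  forall eps, eps > 0 -> y u >= INR (length L) * d - eps.
Proof.
  intros Hpos Hdis Hy L. induction L as [|n0 L IH]; intros HND HL u d Hu Hhyp eps He.
  - cbn [length INR]. pose proof (proj2 Hy u Hu). cbv beta in *. lra.
  - inversion HND as [|? ? Hn0L HNDL]; subst.
    assert (Hn0 : (n0 < N)%nat) by (apply HL; left; auto).
    set (k := INR (length L)).
    assert (Hk : 0 <= k) by apply pos_INR.
    set (eta := eps / (4 * (k + 1))).
    assert (Heta : eta > 0) by (unfold eta; apply Rdiv_lt_0_compat; lra).
    assert (Hketa : (k + 1) * eta = eps / 4) by (unfold eta; field; lra).
    assert (HLn : forall m, In m L -> (m < N)%nat /\ m <> n0).
    { intros m Hm. split. apply HL; right; auto. intro; subst; auto. }
    destruct (sublemma E N x n0 Hn0 Hpos Hdis L HLn u Hu eta Heta) as [v [Hv [Hvu [H1 H2]]]].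
    set (u' := add u (opp v)).
    assert (Hu' : posE u') by (apply le_sub0; auto).
    assert (IHa := IH HNDL (fun m Hm => HL m (or_intror Hm)) u' (d - eta) Hu').
    assert (Hy' : y u' >= k * (d - eta) - eps / 2).
    { apply IHa; [| lra]. intros n Hn v'' Hv'' Hv''u.
      assert (HnN : (n < N)%nat) by (apply HL; right; auto).
      assert (Hv''u0 : le v'' u) by (apply le_trans with u'; auto; apply le_sub_self; auto).
      pose proof (Hhyp n (or_intror Hn) v'' Hv'' Hv''u0).
      pose proof (H2 n Hn). pose proof (Hpos n HnN) as [Hd _]. unfold u'.
      rewrite !(lin_sub E (x n)) in *; auto. lra. }
    pose proof (Hhyp n0 (or_introl eq_refl) v Hv Hvu).
    pose proof Hy as [Hyd _]. unfold u' in Hy'. rewrite lin_sub in Hy'; auto.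
    cbn [length]. rewrite S_INR. fold k.
    assert (k * eta <= eps / 4) by nra.
    fold k in H1. clearbody eta k. lra.
Qed.

Theorem lemma3p4 (E : BanachLattice) (u0 : E) (delta : R) (N : nat)
  (x : nat -> (E -> R)) (y : E -> R) :
  posE u0 -> delta > 0 ->
  (forall n, (n < N)%nat -> dpos (x n)) ->
  (forall n m, (n < N)%nat -> (m < N)%nat -> n <> m -> ddisjoint (x n) (x m)) ->
  (forall n, (n < N)%nat -> x n u0 >= delta) ->
  dpos y ->
  (forall n, (n < N)%nat -> in_interval_plus_ball u0 y (/ 2 * delta) (x n)) ->
  INR N <= 2 * y u0 / delta.
Proof.
  intros Hu0 Hdelta Hpos Hdis Hge Hy Hball.
  set (c := / 2 * delta).
  assert (Hkey : forall n, (n < N)%nat -> forall v, posE v -> le v u0 -> x n v <= y v + c).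
  { intros n Hn v Hv Hvu.
    destruct (Hball n Hn) as [z [w [Hz [_ [Hzy [[Hw [r [[a [[Ha [Hwa [Hwa' _]]] Hr]] Hr1]]] Hx]]]]]].
    rewrite absE_pos in Hr; auto.
    assert (Hapos : forall p, posE p -> 0 <= a p).
    { intros p Hp. pose proof (Hwa p Hp). pose proof (Hwa' p Hp). cbv beta in *. lra. }
    assert (a v <= a u0).
    { pose proof (Hapos _ (le_sub0 E _ _ Hvu)). rewrite lin_sub in H; auto. lra. }
    pose proof (Hwa v Hv). pose proof (Hzy v Hv). rewrite Hx. unfold c in *.
    assert (w v <= 1) by lra.
    apply Rplus_le_compat; auto. rewrite <- (Rmult_1_r (/2 * delta)) at 2.
    apply Rmult_le_compat_l; lra. }
  assert (Hcl := claim E N x y Hpos Hdis Hy (seq 0 N) (seq_NoDup N 0)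
     (fun m Hm => proj2 (proj1 (in_seq N 0 m) Hm)) u0 c Hu0).
  rewrite length_seq in Hcl.
  assert (Hmain : y u0 >= INR N * c).
  { apply Rle_ge. apply le_epsilon. intros eps He.
    assert (y u0 >= INR N * c - eps); [|lra]. apply Hcl; [|lra].
    intros n Hn v Hv Hvu. apply in_seq in Hn. destruct Hn as [_ Hn]. simpl in Hn.
    pose proof (Hkey n Hn v Hv Hvu). pose proof (Hge n Hn).
    pose proof (Hpos n Hn) as [Hd _]. rewrite lin_sub; auto. unfold c in *. lra. }
  unfold c in Hmain.
  apply (Rmult_le_reg_r delta); [lra|].
  replace (2 * y u0 / delta * delta) with (2 * y u0) by (field; lra). lra.
Qed.
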